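(* Let $K,G,m_0,A_g,B_g,\bar f_c,\bar f_t>0$, $e\in[0.5,1]$, and let $m_g(p)=A_gB_g\bar f_c\,e^{\frac{p-\bar f_t/3}{B_g\bar f_c}}$, so $m_g'(p)=A_g e^{\frac{p-\bar f_t/3}{B_g\bar f_c}}$. Let $\hat f(p,\varrho,\varrho_e)=\frac32\left(\frac{\varrho}{\bar f_c}\right)^2+m_0\left(\frac{\varrho_e}{\sqrt6\bar f_c}+\frac{p}{\bar f_c}\right)-1$. Let $\boldsymbol\sigma^{tr}\in\mathbb R^{3\times3}_{sym}$ be given with $p^{tr}=p(\boldsymbol\sigma^{tr})$, $\mathbf s^{tr}=\mathbf s(\boldsymbol\sigma^{tr})$, $\varrho^{tr}=\|\mathbf s^{tr}\|$, $\mathbf n^{tr}=\mathbf s^{tr}/\varrho^{tr}$, $\theta^{tr}=\theta(\boldsymbol\sigma^{tr})$, $r_e^{tr}=r_e(\cos\theta^{tr})$, $\varrho_e^{tr}=\varrho_e(\boldsymbol\sigma^{tr})$, and assume $\hat f(p^{tr},\varrho^{tr},\varrho_e^{tr})>0$. Consider the problem (P): find $\boldsymbol\sigma\in\mathbb R^{3\times3}_{sym}$ and $\triangle\lambda$ with $$\boldsymbol\sigma=\boldsymbol\sigma^{tr}-\triangle\lambda\Big[K\tfrac{m_g'(p(\boldsymbol\sigma))}{\bar f_c}\mathbf I+2G\Big(\tfrac{3\varrho(\boldsymbol\sigma)}{\bar f_c^2}+\tfrac{m_0}{\sqrt6\bar f_c}\Big)\hat{\mathbf n}\Big]\ \text{for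 some }\hat{\mathbf n}\in\partial\varrho(\boldsymbol\sigma),$$ $\triangle\lambda\ge0$, $\hat f(p(\boldsymbol\sigma),\varrho(\boldsymbol\sigma),\varrho_e(\boldsymbol\sigma))\le0$, $\triangle\lambda\hat f(p(\boldsymbol\sigma),\varrho(\boldsymbol\sigma),\varrho_e(\boldsymbol\sigma))=0$. If $(\boldsymbol\sigma,\triangle\lambda)$ solves (P) and $p=p(\boldsymbol\sigma)$, $\varrho=\varrho(\boldsymbol\sigma)$, then $(p,\varrho,\triangle\lambda)$ solves the system (R): $$p=p^{tr}-\triangle\lambda K\tfrac{m_g'(p)}{\bar f_c},\quad \varrho=\Big[\varrho^{tr}-\triangle\lambda 2G\Big(\tfrac{3\varrho}{\bar f_c^2}+\tfrac{m_0}{\sqrt6\bar f_c}\Big)\Big]^+,\quad \hat f(p,\varrho,\varrho r_e^{tr})=0.$$ Conversely, if $(p,\varrho,\triangle\lambda)$ solves (R), then $(\boldsymbol\sigma,\triangle\lambda)$ solves (P), where $\boldsymbol\sigma=p\mathbf I+\varrho\mathbf n^{tr}$ if $\varrho^{tr}>\triangle\lambda2G\big(\frac{3\varrho}{\bar f_c^2}+\frac{m_0}{\sqrt6\bar f_c}\big)$ and $\boldsymbol\sigma=p\mathbf I$ otherwise.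
   Context: $\mathbb R^{3\times3}_{sym}$: real symmetric $3\times3$ matrices with Frobenius product '':'' and norm; $\mathbf I$ identity; $p(\boldsymbol\sigma)=\frac13\mathbf I:\boldsymbol\sigma$, $\mathbf s(\boldsymbol\sigma)=\boldsymbol\sigma-p(\boldsymbol\sigma)\mathbf I$, $\varrho(\boldsymbol\sigma)=\|\mathbf s(\boldsymbol\sigma)\|$; for $\varrho(\boldsymbol\sigma)>0$, $\theta(\boldsymbol\sigma)=\frac13\arccos\big(\frac{3\sqrt3}{2}J_3/J_2^{3/2}\big)$ with $J_2=\frac12\mathbf s:\mathbf s$, $J_3=\frac13\mathbf s^3:\mathbf I$. $r_e(\cos\theta)=\frac{4(1-e^2)\cos^2\theta+(2e-1)^2}{2(1-e^2)\cos\theta+(2e-1)\sqrt{4(1-e^2)\cos^2\theta+5e^2-4e}}$; $\varrho_e(\boldsymbol\sigma)=\varrho(\boldsymbol\sigma)r_e(\cos\theta(\boldsymbol\sigma))$ if $\varrho(\boldsymbol\sigma)>0$ and $0$ otherwise. When $\varrho^{tr}=0$ the quantity $\varrho r_e^{tr}$ is interpreted as $0$. $(x)^+=\max\{0,x\}$. $\partial\varrho(\boldsymbol\sigma)=\{\mathbf s(\boldsymbol\sigma)/\varrho(\boldsymbol\sigma)\}$ if $\varrho(\boldsymbol\sigma)>0$, and $\{\hat{\mathbf n}\in\mathbb R^{3\times3}_{sym}:\mathbf I:\hat{\mathbf n}=0,\|\hat{\mathbf n}\|\le1\}$ if $\varrho(\boldsymbol\sigma)=0$. *)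

(* Defs.v *)
From HB Require Import structures.
From mathcomp Require Import all_boot all_order all_algebra.
From mathcomp Require Import all_classical all_reals all_analysis.
Set Implicit Arguments. Unset Strict Implicit. Unset Printing Implicit Defensive.
Import Order.TTheory GRing.Theory Num.Theory.
Local Open Scope ring_scope.

Section Defs.
Variable R : realType.
Local Notation M := 'M[R]_3.

Definition symmx (A : M) : Prop := A^T = A.
Definition frob (A B : M) : R := \sum_(i < 3) \sum_(j < 3) A i j * B i j.
Definition fnorm (A : M) : R := Num.sqrt (frob A A).
Definition Imx : M := 1%:M.
Definition pmean (S : M) : R := 3^-1 * frob Imx S.
Definition dev (S : M) : M := S - (pmean S) *: Imx.
Definition rho (S : M) : R := fnorm (dev S).
Definition J2 (S : M) : R := 2^-1 * frob (dev S) (dev S).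
Definition J3 (S : M) : R := 3^-1 * frob (dev S *m dev S *m dev S) Imx.
(* J2^{3/2} = J2 * sqrt J2 (J2 >= 0) *)
Definition lode (S : M) : R :=
  3^-1 * acos ((3 * Num.sqrt 3 / 2) * J3 S / (J2 S * Num.sqrt (J2 S))).
Definition r_e (e c : R) : R :=
  (4 * (1 - e ^+ 2) * c ^+ 2 + (2 * e - 1) ^+ 2) /
  (2 * (1 - e ^+ 2) * c
   + (2 * e - 1) * Num.sqrt (4 * (1 - e ^+ 2) * c ^+ 2 + 5 * e ^+ 2 - 4 * e)).
Definition rho_e (e : R) (S : M) : R :=
  if 0 < rho S then rho S * r_e e (cos (lode S)) else 0.
Definition subdiff_rho (S nh : M) : Prop :=
  if 0 < rho S then nh = (rho S)^-1 *: dev S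
  else symmx nh /\ frob Imx nh = 0 /\ fnorm nh <= 1.
Definition pos_part (x : R) : R := Num.max 0 x.
Definition dmg (Ag Bg fc ft p : R) : R := Ag * expR ((p - ft / 3) / (Bg * fc)).
Definition fhat (m0 fc p r re : R) : R :=
  3 / 2 * (r / fc) ^+ 2 + m0 * (re / (Num.sqrt 6 * fc) + p / fc) - 1.

Definition probP (K G m0 Ag Bg fc ft e : R) (Str S : M) (dl : R) : Prop :=
  symmx S /\
  (exists nh : M, subdiff_rho S nh /\
     S = Str - dl *: (K * dmg Ag Bg fc ft (pmean S) / fc) *: Imx
             - dl *: ((2 * G * (3 * rho S / fc ^+ 2 + m0 / (Num.sqrt 6 * fc))) *: nh))
  /\ 0 <= dl
  /\ fhat m0 fc (pmean S) (rho S) (rho_e e S) <= 0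
  /\ dl * fhat m0 fc (pmean S) (rho S) (rho_e e S) = 0.

(* varrho * r_e^tr, interpreted as 0 when rho^tr = 0 *)
Definition rho_retr (e : R) (Str : M) (r : R) : R :=
  if 0 < rho Str then r * r_e e (cos (lode Str)) else 0.

Definition sysR (K G m0 Ag Bg fc ft e : R) (Str : M) (p r dl : R) : Prop :=
  p = pmean Str - dl * K * dmg Ag Bg fc ft p / fc
  /\ r = pos_part (rho Str - dl * 2 * G * (3 * r / fc ^+ 2 + m0 / (Num.sqrt 6 * fc)))
  /\ fhat m0 fc p r (rho_retr e Str r) = 0.

Definition sigma_of (G m0 fc : R) (Str : M) (p r dl : R) : M :=
  if dl * 2 * G * (3 * r / fc ^+ 2 + m0 / (Num.sqrt 6 * fc)) < rho Str
  then p *: Imx + r *: ((rho Str)^-1 *: dev Str)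
  else p *: Imx.
End Defs.

(* Main.v *)
Require Import Defs.
From HB Require Import structures.
From mathcomp Require Import all_boot all_order all_algebra.
From mathcomp Require Import all_classical all_reals all_analysis.
From mathcomp Require Import ring lra.
Import Order.TTheory GRing.Theory Num.Theory.
Local Open Scope ring_scope.

Section Helpers.
Variable R : realType.
Implicit Types A B C : 'M[R]_3.

Lemma acos_range (x : R) : 0 <= acos x <= pi.
Proof.
rewrite unlock. case: xgetP => [y -> [] //|_].
by rewrite /= le_refl pi_ge0.
Qed.

Lemma cos_lode_ge0 A : 0 <= cos (lode A).
Proof.
apply: cos_ge0_pihalf; rewrite /lode.
have /andP[h1 h2] := acos_range ((3 * Num.sqrt 3 / 2) * J3 A / (J2 A * Num.sqrt (J2 A))).
have hp := pi_ge0 R.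
apply/andP; split; lra.
Qed.

Lemma r_e_ge0 (e c : R) : 2^-1 <= e <= 1 -> 0 <= c -> 0 <= r_e e c.
Proof.
move=> /andP[e1 e2] c0; rewrite /r_e.
have h1 : 0 <= 1 - e ^+ 2 by nra.
apply: divr_ge0.
  apply: addr_ge0; last exact: sqr_ge0.
  by rewrite !mulr_ge0 // ?sqr_ge0.
apply: addr_ge0; first by rewrite !mulr_ge0.
apply: mulr_ge0; [lra | exact: sqrtr_ge0].
Qed.

Lemma frobDl A B C : frob (A + B) C = frob A C + frob B C.
Proof.
rewrite /frob -big_split; apply: eq_bigr => i _.
rewrite -big_split; apply: eq_bigr => j _; by rewrite mxE mulrDl.
Qed.

Lemma frobZl a A B : frob (a *: A) B = a * frob A B.
Proof.
rewrite /frob mulr_sumr; apply: eq_bigr => i _.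
rewrite mulr_sumr; apply: eq_bigr => j _; by rewrite mxE mulrA.
Qed.

Lemma frobC A B : frob A B = frob B A.
Proof. by rewrite /frob; apply: eq_bigr => i _; apply: eq_bigr => j _; rewrite mulrC. Qed.

Lemma frobDr A B C : frob C (A + B) = frob C A + frob C B.
Proof. by rewrite frobC frobDl !(frobC C). Qed.

Lemma frobZr a A B : frob B (a *: A) = a * frob B A.
Proof. by rewrite frobC frobZl frobC. Qed.

Lemma frobNl A B : frob (- A) B = - frob A B.
Proof. by rewrite -scaleN1r frobZl mulN1r. Qed.

Lemma frobII : frob (Imx R) (Imx R) = 3.
Proof.
rewrite /frob /Imx !big_ord_recr !big_ord0 /= !mxE /=.
by ring.
Qed.

Lemma pmeanD A B : pmean (A + B) = pmean A + pmean B.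
Proof. by rewrite /pmean frobDr mulrDr. Qed.
Lemma pmeanZ a A : pmean (a *: A) = a * pmean A.
Proof. by rewrite /pmean frobZr mulrCA. Qed.
Lemma pmeanN A : pmean (- A) = - pmean A.
Proof. by rewrite -scaleN1r pmeanZ mulN1r. Qed.
Lemma pmeanI : pmean (Imx R) = 1.
Proof. by rewrite /pmean frobII mulVf. Qed.
Lemma pmean_dev A : pmean (dev A) = 0.
Proof. by rewrite /dev pmeanD pmeanN pmeanZ pmeanI mulr1 subrr. Qed.
Lemma frobI_pmean A : frob (Imx R) A = 3 * pmean A.
Proof. by rewrite /pmean mulrA mulfV ?mul1r. Qed.
Lemma frobI_dev A : frob (Imx R) (dev A) = 0.
Proof. by rewrite frobI_pmean pmean_dev mulr0. Qed.

Lemma devD A B : dev (A + B) = dev A + dev B.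
Proof. rewrite /dev pmeanD scalerDl opprD. by rewrite addrACA. Qed.
Lemma devZ a A : dev (a *: A) = a *: dev A.
Proof. by rewrite /dev pmeanZ scalerBr scalerA. Qed.
Lemma devN A : dev (- A) = - dev A.
Proof. by rewrite -scaleN1r devZ scaleN1r. Qed.
Lemma devI : dev (Imx R) = 0.
Proof. by rewrite /dev pmeanI scale1r subrr. Qed.
Lemma dev_dev A : dev (dev A) = dev A.
Proof. by rewrite /dev pmean_dev scale0r subr0. Qed.
Lemma dev_pmean0 A : pmean A = 0 -> dev A = A.
Proof. by move=> h; rewrite /dev h scale0r subr0. Qed.
Lemma decomp A : A = pmean A *: Imx R + dev A.
Proof. by rewrite /dev addrC subrK. Qed.

Lemma mul_self_ge0 (x : R) : 0 <= x * x.
Proof. by rewrite -expr2 sqr_ge0. Qed.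

Lemma frob_ge0 A : 0 <= frob A A.
Proof. by apply: sumr_ge0 => i _; apply: sumr_ge0 => j _; exact: mul_self_ge0. Qed.

Lemma fnormZ a A : fnorm (a *: A) = `|a| * fnorm A.
Proof.
by rewrite /fnorm frobZl frobZr mulrA sqrtrM ?mul_self_ge0 // -expr2 sqrtr_sqr.
Qed.

Lemma fnorm_ge0 A : 0 <= fnorm A.
Proof. exact: sqrtr_ge0. Qed.

Lemma fnorm0_eq A : fnorm A = 0 -> A = 0.
Proof.
move=> /eqP; rewrite sqrtr_eq0 => h.
have h0 : frob A A = 0 by apply/eqP; rewrite eq_le h frob_ge0.
apply/matrixP => i j; rewrite mxE.
have hi : \sum_(j < 3) A i j * A i j = 0.
  apply: (psumr_eq0P _ h0) => //.
  by move=> k _; apply: sumr_ge0 => l _; exact: mul_self_ge0.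
have := psumr_eq0P (fun l _ => mul_self_ge0 (A i l)) hi.
by move=> /(_ j isT) /eqP; rewrite mulf_eq0 orbb => /eqP.
Qed.

Lemma rho_ge0 A : 0 <= rho A.
Proof. exact: fnorm_ge0. Qed.

Lemma J2Z c A : J2 (c *: A) = c ^+ 2 * J2 A.
Proof. by rewrite /J2 devZ frobZl frobZr; ring. Qed.

Lemma J3Z c A : J3 (c *: A) = c ^+ 3 * J3 A.
Proof.
rewrite /J3 devZ -!scalemxAl -!scalemxAr -!scalemxAl !scalerA frobZl.
by ring. Qed.

Lemma lode_scale A B c : dev A = c *: dev B -> 0 < c -> lode A = lode B.
Proof.
move=> hAB c0.
have eA : dev A = dev (c *: B) by rewrite devZ.
have e2 : J2 A = J2 (c *: B) by rewrite /J2 eA.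
have e3 : J3 A = J3 (c *: B) by rewrite /J3 eA.
rewrite /lode e2 e3 J2Z J3Z sqrtrM ?sqr_ge0 // sqrtr_sqr gtr0_norm //.
congr (_ * acos _).
have hc : c ^+ 3 != 0 by rewrite expf_neq0 // gt_eqF.
set k := 3 * Num.sqrt 3 / 2; set a := J3 B; set b := J2 B; set d := Num.sqrt b.
have -> : c ^+ 2 * b * (c * d) = c ^+ 3 * (b * d) by ring.
rewrite invfM.
transitivity ((c ^+ 3 * (c ^+ 3)^-1) * (k * a / (b * d))); first by ring.
by rewrite mulfV // mul1r.
Qed.

Lemma pos_partE (x : R) : pos_part x = if 0 < x then x else 0.
Proof. by rewrite /pos_part /Num.max. Qed.
Lemma symmxD (A B : 'M[R]_3) : symmx A -> symmx B -> symmx (A + B).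
Proof. by rewrite /symmx => hA hB; rewrite linearD /= hA hB. Qed.
Lemma symmxZ a (A : 'M[R]_3) : symmx A -> symmx (a *: A).
Proof. by rewrite /symmx => hA; rewrite linearZ /= hA. Qed.
Lemma symmxI : symmx (Imx R).
Proof. by rewrite /symmx /Imx trmx1. Qed.

Lemma symmx_dev (A : 'M[R]_3) : symmx A -> symmx (dev A).
Proof.
move=> hA; rewrite /dev; apply: symmxD => //.
by rewrite /symmx linearN /= (symmxZ _ _ symmxI). 
Qed.

Lemma pos_part_ge0 (x : R) : 0 <= pos_part x.
Proof. by rewrite pos_partE; case: ifP => // /ltW. Qed.
Lemma pos_part_ge (x : R) : x <= pos_part x.
Proof. by rewrite pos_partE; case: ifP => // /negbT; rewrite -leNgt. Qed.
Lemma pos_part_id (x : R) : 0 <= x -> pos_part x = x.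
Proof.
rewrite pos_partE le_eqVlt => /orP[/eqP <-|->] //; by rewrite ltxx.
Qed.
Lemma pos_part_0 (x : R) : x <= 0 -> pos_part x = 0.
Proof. by rewrite pos_partE leNgt => /negbTE ->. Qed.

Lemma fnorm0 : fnorm (0 : 'M[R]_3) = 0.
Proof. by rewrite -(scale0r (0 : 'M[R]_3)) fnormZ normr0 mul0r. Qed.

Lemma fhat_mono (m0 fc p1 p2 r1 r2 q1 q2 : R) : 0 < m0 -> 0 < fc ->
  p1 <= p2 -> 0 <= r1 -> r1 <= r2 -> q1 <= q2 ->
  fhat m0 fc p1 r1 q1 <= fhat m0 fc p2 r2 q2.
Proof.
move=> m00 fc0 hp hr1 hr hq; rewrite /fhat lerD2r.
have s6 : 0 < Num.sqrt 6 * fc :> R by rewrite mulr_gt0 // sqrtr_gt0.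
apply: lerD.
  apply: ler_wpM2l => //.
  have h1 : r1 / fc <= r2 / fc by apply: ler_wpM2r => //; rewrite invr_ge0 ltW.
  have h0 : 0 <= r1 / fc by rewrite divr_ge0 // ltW.
  by rewrite ler_sqr ?nnegrE // (le_trans h0 h1).
apply: ler_wpM2l; first exact: ltW.
apply: lerD; apply: ler_wpM2r => //; rewrite invr_ge0 ltW //.
Qed.
End Helpers.

Lemma dir1 (R : realType) (K G m0 Ag Bg fc ft e : R) (Str : 'M[R]_3) :
  0 < K -> 0 < G -> 0 < m0 -> 0 < Ag -> 0 < Bg -> 0 < fc -> 0 < ft ->
  2^-1 <= e <= 1 ->
  symmx Str ->
  0 < fhat m0 fc (pmean Str) (rho Str) (rho_e e Str) ->
  (forall (S : 'M[R]_3) (dl : R),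
     probP K G m0 Ag Bg fc ft e Str S dl ->
     sysR K G m0 Ag Bg fc ft e Str (pmean S) (rho S) dl).
Proof.
move=> K0 G0 m00 Ag0 Bg0 fc0 ft0 he hStr hfStr S dl.
move=> [HSs [[nh [Hsub HS]] [Hdl [Hf Hc]]]].
set a := K * dmg Ag Bg fc ft (pmean S) / fc in HS.
set X := 3 * rho S / fc ^+ 2 + m0 / (Num.sqrt 6 * fc).
have X0 : 0 < X.
  rewrite /X; apply: ltr_wpDl.
    by rewrite !mulr_ge0 ?rho_ge0 // invr_ge0 exprn_ge0 // ltW.
  by rewrite divr_gt0 // mulr_gt0 // sqrtr_gt0.
set b := 2 * G * X in HS.
have b0 : 0 < b by rewrite /b !mulr_gt0.
have hnh : pmean nh = 0.
  move: Hsub; rewrite /subdiff_rho; case: ifP => _.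
    by move=> ->; rewrite pmeanZ pmean_dev mulr0.
  by move=> [_ [h _]]; rewrite /pmean h mulr0.
have Hp : pmean S = pmean Str - dl * a.
  rewrite {1}HS !pmeanD !pmeanN !pmeanZ pmeanI hnh; rewrite -[dl *: a]/(dl * a); ring.
have Hdev : dev S = dev Str - (dl * b) *: nh.
  rewrite {1}HS !devD !devN !devZ devI (@dev_pmean0 _ nh hnh) scalerA; by rewrite !scaler0 subr0.
have dl0 : dl != 0.
  apply/eqP => dlE; move: Hf; rewrite lt_geF //.
  suff -> : S = Str by [].
  by rewrite HS dlE !scale0r !subr0.
have Hf0 : fhat m0 fc (pmean S) (rho S) (rho_e e S) = 0.
  by move/eqP: Hc; rewrite mulf_eq0 (negbTE dl0) /= => /eqP.
have hq : dl * 2 * G * X = dl * b by rewrite /b !mulrA.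
split; first by rewrite {1}Hp /a; ring.
have [rS0|rS0] := ltP 0 (rho S).
  have nhE : nh = (rho S)^-1 *: dev S by move: Hsub; rewrite /subdiff_rho rS0.
  set c := 1 + dl * b / rho S.
  have c0 : 0 < c by rewrite /c ltr_wpDr // divr_ge0 // ?mulr_ge0 // ltW.
  have HStr : dev Str = c *: dev S.
    have := Hdev; move/(congr1 (fun Y => Y + (dl * b) *: nh)); rewrite subrK => <-.
    by rewrite nhE scalerA /c scalerDl scale1r.
  have HrStr : rho Str = rho S + dl * b.
    rewrite /rho HStr fnormZ gtr0_norm // -/(rho S) /c; field.
    by rewrite gt_eqF.
  have rStr0 : 0 < rho Str by rewrite HrStr ltr_wpDr // mulr_ge0 // ltW.
  split.
    by rewrite hq HrStr addrK pos_part_id // ltW.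
  rewrite /rho_retr rStr0 (@lode_scale _ _ _ _ HStr c0).
  by move: Hf0; rewrite /rho_e rS0.
have rS : rho S = 0 by apply/eqP; rewrite eq_le rS0 rho_ge0.
have dS : dev S = 0 by apply: fnorm0_eq.
move: Hsub; rewrite /subdiff_rho ifF; last by rewrite rS ltxx.
move=> -[_ [_ hn]].
have HStr : dev Str = (dl * b) *: nh.
  by apply/eqP; rewrite -subr_eq0 -Hdev dS.
have hle : rho Str <= dl * b.
  have dlb0 : 0 < dl * b by rewrite mulr_gt0 // lt_def dl0.
  rewrite /rho HStr fnormZ gtr0_norm //.
  by rewrite -{2}(mulr1 (dl * b)) ler_wpM2l // mulr_ge0 // ltW.
split.
  by rewrite hq pos_part_0 // subr_le0.
have -> : rho_retr e Str (rho S) = 0 by rewrite /rho_retr rS mul0r if_same.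
by move: Hf0; rewrite /rho_e rS ltxx.
Qed.

Lemma dir2 (R : realType) (K G m0 Ag Bg fc ft e : R) (Str : 'M[R]_3) :
  0 < K -> 0 < G -> 0 < m0 -> 0 < Ag -> 0 < Bg -> 0 < fc -> 0 < ft ->
  2^-1 <= e <= 1 ->
  symmx Str ->
  0 < fhat m0 fc (pmean Str) (rho Str) (rho_e e Str) ->
  (forall p r dl : R,
     sysR K G m0 Ag Bg fc ft e Str p r dl ->
     probP K G m0 Ag Bg fc ft e Str (sigma_of G m0 fc Str p r dl) dl).
Proof.
move=> K0 G0 m00 Ag0 Bg0 fc0 ft0 he hStr hfStr p r dl [Hp [Hr Hf]].
have r0 : 0 <= r by rewrite Hr pos_part_ge0.
set d := dmg Ag Bg fc ft p in Hp *.
have d0 : 0 < d by rewrite /d /dmg mulr_gt0 // expR_gt0.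
set X := 3 * r / fc ^+ 2 + m0 / (Num.sqrt 6 * fc) in Hr *.
have X0 : 0 < X.
  rewrite /X; apply: ltr_wpDl.
    by rewrite !mulr_ge0 // invr_ge0 exprn_ge0 // ltW.
  by rewrite divr_gt0 // mulr_gt0 // sqrtr_gt0.
set b := 2 * G * X.
have b0 : 0 < b by rewrite /b !mulr_gt0.
have hq : dl * 2 * G * X = dl * b by rewrite /b !mulrA.
rewrite hq in Hr.
have q0 : 0 <= r_e e (cos (lode Str)) by apply: r_e_ge0 => //; exact: cos_lode_ge0.
have dl0 : 0 < dl.
  rewrite ltNge; apply/negP => dlle.
  have hp : pmean Str <= p.
    have t : 0 <= - dl * (K * d / fc).
      by rewrite mulr_ge0 ?oppr_ge0 // divr_ge0 // ?mulr_ge0 // ltW.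
    rewrite Hp; lra.
  have hr : rho Str <= r.
    rewrite Hr; apply: (le_trans _ (pos_part_ge _ _)).
    have t : 0 <= - dl * b by rewrite mulr_ge0 ?oppr_ge0 // ltW.
    lra.
  have : fhat m0 fc (pmean Str) (rho Str) (rho_retr e Str (rho Str))
         <= fhat m0 fc p r (rho_retr e Str r).
    apply: fhat_mono => //; first exact: rho_ge0.
    rewrite /rho_retr; case: ifP => // _.
    by apply: ler_wpM2r.
  by rewrite Hf leNgt hfStr.
rewrite /sigma_of hq; case: ifP => hlt.
  have Er : r = rho Str - dl * b by rewrite Hr pos_part_id // subr_ge0 ltW.
  have rp : 0 < r by rewrite Er subr_gt0.
  have rS0 : 0 < rho Str by apply: lt_trans hlt; rewrite mulr_gt0.
  set sig := p *: Imx R + r *: ((rho Str)^-1 *: dev Str).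
  have Hpm : pmean sig = p.
    by rewrite /sig pmeanD !pmeanZ pmeanI pmean_dev !mulr0 mulr1 addr0.
  have c0 : 0 < r / rho Str by rewrite divr_gt0.
  have Hdv : dev sig = (r / rho Str) *: dev Str.
    by rewrite /sig devD !devZ devI scaler0 add0r dev_dev scalerA.
  have Hrho : rho sig = r.
    rewrite /rho Hdv fnormZ gtr0_norm // -/(rho Str); field; by rewrite gt_eqF.
  split.
    apply: symmxD; first exact: (symmxZ _ _ _ (symmxI _)).
    by apply: symmxZ; apply: symmxZ; apply: symmx_dev.
  split.
    exists ((rho sig)^-1 *: dev sig); split.
      by rewrite /subdiff_rho Hrho rp.
    rewrite Hpm Hrho -/d -/X -/b Hdv.
    apply/matrixP => i j; rewrite /sig /dev !mxE.
    rewrite {1}Hp.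
    move: (Imx R i j) (Str i j) => I0 S0.
    rewrite -[dl *: _]/(dl * _) Er.
    field.
    by rewrite -Er !gt_eqF.
  have Hre : rho_e e sig = rho_retr e Str r.
    rewrite /rho_e /rho_retr Hrho rp rS0.
    by rewrite (@lode_scale _ _ _ _ Hdv c0).
  rewrite Hpm Hrho Hre Hf mulr0; split => //; exact: ltW.
have hle : rho Str <= dl * b by rewrite leNgt hlt.
have Er : r = 0 by rewrite Hr pos_part_0 // subr_le0.
set sig := p *: Imx R.
have Hpm : pmean sig = p by rewrite /sig pmeanZ pmeanI mulr1.
have Hdv : dev sig = 0 by rewrite /sig devZ devI scaler0.
have Hrho : rho sig = 0 by rewrite /rho Hdv fnorm0.
have dlb0 : 0 < dl * b by rewrite mulr_gt0.
split; first exact: (symmxZ _ _ _ (symmxI _)).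
split.
  exists ((dl * b)^-1 *: dev Str); split.
    rewrite /subdiff_rho Hrho ltxx; split; first by apply: symmxZ; apply: symmx_dev.
    split; first by rewrite frobZr frobI_dev mulr0.
    rewrite fnormZ gtr0_norm ?invr_gt0 // mulrC -/(rho Str).
    by rewrite ler_pdivrMr // mul1r.
  have bE : 2 * G * (3 * rho sig / fc ^+ 2 + m0 / (Num.sqrt 6 * fc)) = b.
    by rewrite Hrho /b /X Er.
  rewrite Hpm bE -/d.
  apply/matrixP => i j; rewrite /sig /dev !mxE.
  rewrite {1}Hp.
  move: (Imx R i j) (Str i j) => I0 S0.
  rewrite -[dl *: _]/(dl * _).
  field.
  by rewrite !gt_eqF.
have Hre : rho_e e sig = 0 by rewrite /rho_e Hrho ltxx.
have Hrr : rho_retr e Str r = 0 by rewrite /rho_retr Er mul0r if_same.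
move: Hf; rewrite Hrr Er => Hf.
rewrite Hpm Hrho Hre Hf mulr0; do !split => //; exact: ltW.
Qed.

Theorem theorem5 (R : realType) (K G m0 Ag Bg fc ft e : R) (Str : 'M[R]_3) :
  0 < K -> 0 < G -> 0 < m0 -> 0 < Ag -> 0 < Bg -> 0 < fc -> 0 < ft ->
  2^-1 <= e <= 1 ->
  symmx Str ->
  0 < fhat m0 fc (pmean Str) (rho Str) (rho_e e Str) ->
  (forall (S : 'M[R]_3) (dl : R),
     probP K G m0 Ag Bg fc ft e Str S dl ->
     sysR K G m0 Ag Bg fc ft e Str (pmean S) (rho S) dl)
  /\
  (forall p r dl : R,
     sysR K G m0 Ag Bg fc ft e Str p r dl ->
     probP K G m0 Ag Bg fc ft e Str (sigma_of G m0 fc Str p r dl) dl).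
Proof.
move=> *; split; [exact: dir1 | exact: dir2].
Qed.
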